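(* Let $n\in\mathbb{N}$ and $a\in\mathbb{R}$ with $|a|\ge2$. Let $G_n(a,1)$ be the $(n+2)\times n$ matrix whose $(i,j)$ entry is $1$ if $i=j$, $a$ if $i=j+1$, $1$ if $i=j+2$, and $0$ otherwise. For $1\le i<j\le n+2$, let $G_n(a,1)^{i,j}$ be the $n\times n$ matrix obtained by deleting the $i$-th and $j$-th rows of $G_n(a,1)$. Then $G_n(a,1)^{i,j}$ is invertible; that is, all order-$n$ minors of $G_n(a,1)$ are nonzero. *)

(* Defs.v *)
From mathcomp Require Import all_boot all_order all_algebra.
From mathcomp Require Import reals.
Set Implicit Arguments. Unset Strict Implicit. Unset Printing Implicit Defensive.
Import Order.TTheory GRing.Theory Num.Theory.
Local Open Scope ring_scope.

Definition Gmat (R : nzRingType) (n : nat) (a : R) : 'M[R]_(n.+2, n) :=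
  \matrix_(r < n.+2, c < n)
    (if (r == c :> nat) then 1
     else if (r == c.+1 :> nat) then a
     else if (r == c.+2 :> nat) then 1 else 0).

(* Increasing enumeration of the rows of 'I_(n.+2) other than i and j
   (for i < j): the k-th remaining row. *)
Definition skip2 (n : nat) (i j : 'I_n.+2) (k : 'I_n) : 'I_n.+2 :=
  @inord n.+1 (if (k < i)%N then (k : nat) else if (k.+1 < j)%N then k.+1 else k.+2).

Definition del2rows (R : nzRingType) (n : nat) (i j : 'I_n.+2)
  (M : 'M[R]_(n.+2, n)) : 'M[R]_n := rowsub (skip2 i j) M.

(* Main.v *)
Require Import Defs.
From mathcomp Require Import all_boot all_order all_algebra zify ring lra.
From mathcomp Require Import reals.
Import Order.TTheory GRing.Theory Num.Theory.
Local Open Scope ring_scope.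

Fixpoint Dseq (R : nzRingType) (a : R) (m : nat) : R :=
  match m with
  | 0 => 0
  | 1 => 1
  | (m'.+1 as m1).+1 => - a * Dseq R a m1 - Dseq R a m'
  end.
Arguments Dseq {R}.

Lemma Dseq_ge (R : realType) (a : R) (ha : 2 <= `|a|) m :
  `|Dseq a m| <= `|Dseq a m.+1| /\ 1 <= `|Dseq a m.+1|.
Proof.
elim: m => [|m [IH1 IH2]]; first by rewrite /= normr0 normr1.
have E : Dseq a m.+2 = - a * Dseq a m.+1 - Dseq a m by [].
have H1 : `|a| * `|Dseq a m.+1| - `|Dseq a m| <= `|Dseq a m.+2|.
  rewrite E lerBlDr.
  apply: le_trans (ler_normD _ _); rewrite subrK normrM normrN //.
have H2 : 2 * `|Dseq a m.+1| <= `|a| * `|Dseq a m.+1|.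
  by apply: ler_wpM2r.
split; lra.
Qed.

Lemma seq_zero (R : realType) (a : R) (ha : 2 <= `|a|) (n i j : nat)
  (hij : (i < j)%N) (hj : (j < n.+2)%N) (y : nat -> R)
  (y0 : y 0%N = 0) (y1 : y 1%N = 0) (yn : forall k, (n.+2 <= k)%N -> y k = 0)
  (rec : forall r, (r < n.+2)%N -> r != i -> r != j -> y r + a * y r.+1 + y r.+2 = 0) :
  forall k, y k = 0.
Proof.
have P1 : forall k, (k <= i)%N -> y k = 0 /\ y k.+1 = 0.
  elim=> [|k IH] hk; first by [].
  have [IHa IHb] := IH (ltnW hk); split => //.
  have := rec k ltac:(lia) ltac:(lia) ltac:(lia).
  by rewrite IHa IHb mulr0 !add0r.
have P2 : forall d, (d <= n.+1 - j)%N -> y (n.+2 - d)%N = 0 /\ y (n.+2 - d)%N.+1 = 0.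
  elim=> [|d IH] hd; first by rewrite subn0 !yn.
  have [IHa IHb] := IH (ltnW hd).
  have e : (n.+2 - d = (n.+2 - d.+1).+1)%N by lia.
  rewrite -e; split => //.
  have := rec (n.+2 - d.+1)%N ltac:(lia) ltac:(lia) ltac:(lia).
  by rewrite -e IHa; rewrite e in IHb; rewrite -e in IHb; rewrite IHb mulr0 !addr0.
set s := y i.+2.
have P3 : forall m, (m < j - i)%N -> y (i.+1 + m)%N = s * Dseq a m /\ y (i.+1 + m.+1)%N = s * Dseq a m.+1.
  elim=> [|m IH] hm.
    rewrite ?addn0 ?addn1 (P1 i (leqnn _)).2 /= mulr0 mulr1 //.
  have [IHa IHb] := IH (ltnW hm); split => //.
  have Hr := rec (i.+1 + m)%N ltac:(lia) ltac:(lia) ltac:(lia).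
  have e1 : (i.+1+m).+1 = (i.+1+m.+1)%N by lia.
  have e2 : (i.+1+m).+2 = (i.+1 + m.+2)%N by lia.
  rewrite e2 e1 IHa IHb in Hr.
  have -> : y (i.+1 + m.+2)%N = -(s * Dseq a m + a * (s * Dseq a m.+1)).
    by apply/eqP; rewrite -addr_eq0 addrC Hr.
  rewrite /=; ring.
have Dn : Dseq a (j - i) != 0.
  have := (@Dseq_ge _ _ ha (j - i).-1).2; rewrite prednK; last by lia.
  by apply: contraTneq => ->; rewrite normr0 ler10.
have s0 : s = 0.
  have [d hd] : exists d, (j - i = d.+1)%N by exists (j - i).-1; lia.
  have := (P3 d ltac:(lia)).2; rewrite -hd.
  have e : (i.+1 + (j - i))%N = (n.+2 - (n.+1 - j))%N by lia.
  rewrite e (P2 (n.+1 - j)%N (leqnn _)).1 => /eqP; rewrite eq_sym mulf_eq0 (negbTE Dn) orbF.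
  by move/eqP.
move=> k.
case: (ltnP k i.+2) => hk1; first by have := (P1 (k.-1) ltac:(lia)); case: k hk1 => [|k] //= _ [].
case: (ltnP k j.+2) => hk2.
  have [m hm] : exists m, (k = i.+1 + m)%N by exists (k - i.+1)%N; lia.
  case: (ltnP m (j - i)) => hm2; first by rewrite hm (P3 m hm2).1 s0 mul0r.
  have e : k = (n.+2 - (n.+1 - j))%N by lia.
  by rewrite e (P2 _ (leqnn _)).1.
case: (ltnP k n.+2) => hk4; last by rewrite yn.
have e : k = (n.+2 - (n.+2 - k))%N by lia.
by rewrite e (P2 (n.+2 - k)%N ltac:(lia)).1.
Qed.

Lemma free_of_ker (F : fieldType) m n (A : 'M[F]_(m,n)) :
  (forall v : 'rV_m, v *m A = 0 -> v = 0) -> row_free A.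
Proof.
move=> H; rewrite -kermx_eq0; apply/eqP/row_matrixP => k; rewrite row0; apply: H.
apply/sub_kermxP; exact: row_sub.
Qed.

Theorem proposition4p4 (R : realType) (n : nat) (a : R) (ha : 2 <= `|a|)
  (i j : 'I_n.+2) (hij : (i < j)%N) :
  del2rows i j (Gmat n a) \in unitmx.
Proof.
rewrite -unitmx_tr -row_free_unit; apply: free_of_ker => v Hv.
pose y (k : nat) := \sum_(c < n) (if k == c.+2 then v 0 c else 0).
have Hrow : forall r : nat, \sum_(c < n) v 0 c * (if (r == c :> nat) then 1 else if (r == c.+1 :> nat) then a else if (r == c.+2 :> nat) then 1 else 0) = y r + a * y r.+1 + y r.+2.
  move=> r; rewrite /y mulr_sumr -!big_split /=; apply: eq_bigr => c _.
  rewrite !eqSS.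
  case: (eqVneq (r : nat) (c : nat)) => [->|h1].
    have -> : ((c : nat) == c.+2) = false by lia.
    have -> : ((c : nat) == c.+1) = false by lia.
    rewrite ?eqxx; ring.
  case: (eqVneq (r : nat) (c : nat).+1) => [->|h2].
    have -> : ((c : nat).+1 == c.+2) = false by lia.
    rewrite ?eqxx; ring.
  case: (eqVneq (r : nat) (c : nat).+2) => [_|h3].
    rewrite ?eqxx; ring.
  rewrite ?eqxx; ring.
have yz := @seq_zero R a ha n i j hij (ltn_ord j) y.
have Y : forall k, y k = 0.
  apply: yz.
  - by apply: big1 => c _.
  - by apply: big1 => c _.
  - move=> k hk; apply: big1 => c _; have -> : (k == c.+2) = false by have := ltn_ord c; lia.
    by [].
  move=> r hr hri hrj.
  pose k := if (r < i)%N then r else if (r < j)%N then r.-1 else r.-2.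
  have hj := ltn_ord j.
  have hk : (k < n)%N.
    rewrite /k; case: (ltnP r i) => h1; first lia.
    case: (ltnP r j) => h2; lia.
  have hv : (if (k < i)%N then k else if (k.+1 < j)%N then k.+1 else k.+2) = r.
    rewrite /k; case: (ltnP r i) => h1; first by rewrite h1.
    case: (ltnP r j) => h2.
      have -> : (r.-1 < i)%N = false by lia.
      have -> : (r.-1.+1 < j)%N = true by lia.
      lia.
    have -> : (r.-2 < i)%N = false by lia.
    have -> : (r.-2.+1 < j)%N = false by lia.
    lia.
  have := congr1 (fun M : 'M[R]_(1,n) => M 0 (Ordinal hk)) Hv; rewrite !mxE.
  under eq_bigr do rewrite !mxE.
  have -> : skip2 i j (Ordinal hk) = Ordinal hr.
    by apply: val_inj; rewrite /skip2 /= hv inordK.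
  by rewrite /= Hrow.
apply/rowP => c; rewrite mxE.
have := Y c.+2; rewrite /y (bigD1 c) //= eqxx.
rewrite big1 ?addr0 //.
move=> c' hc'; rewrite !eqSS; case: eqP => // h; have hh : c' = c by apply: val_inj; rewrite /= h. by rewrite hh eqxx in hc'.
Qed.
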